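(* Let $G=(G^0,G^1,r,s)$ be a topological graph in which $G^0$ and $G^1$ are compact Hausdorff spaces and $r,s:G^1\to G^0$ are surjective local homeomorphisms. Then for each $n\in\mathbb{N}$ the sets $\{v\in G^0:|G^1v|=n\}$ and $\{v\in G^0:|vG^1|=n\}$ are compact open.
   Context: For $v\in G^0$, $G^1v:=s^{-1}(v)$ and $vG^1:=r^{-1}(v)$; $|\cdot|$ denotes cardinality. *)

(* Defs.v *)
From HB Require Import structures.
From mathcomp Require Import all_boot all_order all_algebra.
From mathcomp Require Import all_classical all_reals all_analysis.
Set Implicit Arguments. Unset Strict Implicit. Unset Printing Implicit Defensive.
Local Open Scope classical_set_scope.

Definition local_homeo (X Y : topologicalType) (f : X -> Y) : Prop :=
  forall x : X, exists U : set X,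
    [/\ open U, U x, open (f @` U), {in U &, injective f}
      & {within U, continuous f} /\
        exists g : Y -> X, [/\ {within f @` U, continuous g},
                               (forall y, (f @` U) y -> U (g y)) &
                               (forall y, (f @` U) y -> f (g y) = y)]].

(* G^1 v = s^{-1}(v) ; v G^1 = r^{-1}(v) *)
Definition card_src_eq (E V : Type) (s : E -> V) (n : nat) : set V :=
  [set v | (s @^-1` [set v] #= `I_n)%card].

(* Main.v *)
Require Import Defs.
From HB Require Import structures.
From mathcomp Require Import all_boot all_order all_algebra.
From mathcomp Require Import all_classical all_reals all_analysis.
From mathcomp Require Import finmap.
Local Open Scope classical_set_scope.
Local Open Scope card_scope.

Definition pE {T : topologicalType} (x : T) : Type := T.
HB.instance Definition _ (T : topologicalType) (x : T) := Topological.on (pE x).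
HB.instance Definition _ (T : topologicalType) (x : T) := isPointed.Build (pE x) x.

Lemma cc {T : topologicalType} (x : T) (A : set T) : compact A -> cover_compact A.
Proof.
move=> cA; have h := compact_cover (pE x).
have : @compact (pE x) A by exact cA.
by rewrite h.
Qed.

Lemma locconst (V E : topologicalType) (f : E -> V) (U : E -> set E) (g : E -> V -> E) :
  hausdorff_space V -> hausdorff_space E -> compact [set: E] ->
  (forall x, open (U x)) -> (forall x, U x x) -> (forall x, open (f @` U x)) ->
  (forall x, {in U x &, injective f}) ->
  continuous f ->
  (forall x y, (f @` U x) y -> g x @ y --> g x y) ->
  (forall x y, (f @` U x) y -> U x (g x y)) ->
  (forall x y, (f @` U x) y -> f (g x y) = y) ->
  forall v, \forall w \near v, (f @^-1` [set w]) #= (f @^-1` [set v]).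
Proof.
move=> hV hE cE oU Ux oFU injU cf cg gU fg v.
have injU' x a b : U x a -> U x b -> f a = f b -> a = b.
  by move=> ? ? ?; apply: (injU x) => //; rewrite in_setE.
have gfx x : g x (f x) = x.
  have h : (f @` U x) (f x) by exists x.
  by apply: (injU' x); [exact: gU|exact: Ux|exact: fg].
have cFv : compact (f @^-1` [set v]).
  apply: (subclosed_compact _ cE) => //.
  apply: (continuous_closedP f).1 => //.
  exact: accessible_closed_set1 (hausdorff_accessible hV) v.
have [D' sD' covD] : finite_subset_cover (f @^-1` [set v]) U (f @^-1` [set v]).
  case: (pselect (exists e : E, True)) => [[e0 _]|nE].
    have := @cc _ e0 _ cFv; move=> /(_ E (f @^-1` [set v]) U) h; apply: h => [i _|x Fx]; first exact: oU.
    by exists x.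
  by exists fset0 => // x Fx; case: nE; exists x.
have D'v x : x \in D' -> f x = v by move=> /sD'; rewrite in_setE.
have FD' x : f x = v -> x \in D'.
  move=> fx; have [y yD Uyx] := covD x fx.
  have fy := D'v y yD.
  have -> : x = y by apply: (injU' y) => //; rewrite fx fy.
  exact: yD.
have Na : \forall w \near v, forall x, x \in D' -> (f @` U x) w.
  apply: filterS (@filter_bigI _ _ D' (fun x => f @` U x) (nbhs v) _ _) => [w Hw x xD|x xD].
    exact: Hw.
  apply: open_nbhs_nbhs; split => //; rewrite -(D'v x xD); by exists x.
have Nb : \forall w \near v, forall x y, x \in D' -> y \in D' -> x != y -> g x w != g y w.
  apply: filterS (@filter_bigI _ _ D' (fun x => [set w | forall y, y \in D' -> x != y -> g x w != g y w]) (nbhs v) _ _) => [w Hw x y xD|x xD].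
    exact: Hw.
  apply: filterS (@filter_bigI _ _ D' (fun y => [set w | x != y -> g x w != g y w]) (nbhs v) _ _) => [w Hw y yD|y yD]; first exact: Hw.
  have [<-|nxy] := eqVneq x y.
    by apply: nearW => w /=; rewrite eqxx.
  have := hE; rewrite open_hausdorff => /(_ x y nxy) [[A B] /= [xA yB] [oA oB AB0]].
  move: xA yB; rewrite !in_setE => xA yB.
  have hx : (f @` U x) v by rewrite -(D'v x xD); exists x.
  have hy : (f @` U y) v by rewrite -(D'v y yD); exists y.
  have gxv : g x v = x by rewrite -(D'v x xD) gfx.
  have gyv : g y v = y by rewrite -(D'v y yD) gfx.
  have nA : nbhs v (g x @^-1` A).
    have := cg x v hx; rewrite gxv; apply; apply: open_nbhs_nbhs; split => //.
  have nB : nbhs v (g y @^-1` B).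
    have := cg y v hy; rewrite gyv; apply; apply: open_nbhs_nbhs; split => //.
  apply: filterS (filterI nA nB) => w [Aw Bw] _; apply/eqP => e.
  have : (A `&` B) (g x w) by split => //; rewrite e.
  by move/eqP: AB0 => ->.
set C := \bigcup_(i in [set` D']) U i.
have cK : compact (f @` (~` C)).
  apply: continuous_compact; first exact: continuous_subspaceT.
  apply: (subclosed_compact _ cE) => //; rewrite closedC; apply: bigcup_open => i _; exact: oU.
have Nc : \forall w \near v, ~ (f @` (~` C)) w.
  apply: open_nbhs_nbhs; split; first by rewrite openC; exact: compact_closed.
  move=> [e Ke fe]; apply: Ke; exact: covD.
apply: filterS (filterI Na (filterI Nb Nc)) => w [Ha [Hb Hc]].
apply: card_esym.
have H : set_bij (f @^-1` [set v]) (f @^-1` [set w]) (fun x => g x w).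
  split.
  - move=> x /= fx; exact: fg (Ha x (FD' x fx)).
  - move=> x y; rewrite !in_setE /= => fx fy e.
    have [//|nxy] := eqVneq x y.
    by move: (Hb x y (FD' x fx) (FD' y fy) nxy); rewrite e eqxx.
  - move=> e /= fe.
    have : C e by apply: contrapT => nCe; apply: Hc; exists e.
    move=> [y yD Uye]; exists y; first exact: D'v.
    apply: (injU' y); [exact: gU (Ha y yD)|exact: Uye|].
    by rewrite fg ?fe //; exact: Ha.
have [s _] := Pbij H.
exact: pcard_eq s.
Qed.

Lemma clopen_card (V E : topologicalType) (f : E -> V) :
  hausdorff_space V -> hausdorff_space E -> compact [set: V] -> compact [set: E] ->
  local_homeo f -> forall n, compact (card_src_eq f n) /\ open (card_src_eq f n).
Proof.
move=> hV hE cV cE lh n.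
have /choice[Ug HUg] : forall x, exists p : set E * (V -> E),
   [/\ open p.1, p.1 x, open (f @` p.1), {in p.1 &, injective f} &
    ({within p.1, continuous f} /\
     [/\ {within f @` p.1, continuous p.2},
        (forall y, (f @` p.1) y -> p.1 (p.2 y)) &
        (forall y, (f @` p.1) y -> f (p.2 y) = y)])].
  move=> x; have [W [? ? ? ? [? [h [? ? ?]]]]] := lh x.
  by exists (W, h).
pose U x := (Ug x).1; pose g x := (Ug x).2.
have cf : continuous f.
  move=> x; have [oW Wx _ _ [cW _]] := HUg x.
  move: cW; rewrite continuous_open_subspace // => h; apply: h.
  by rewrite in_setE.
have nb : forall v : V, \forall w \near v, (f @^-1` [set w]) #= (f @^-1` [set v]).
  apply: (@locconst V E f U g hV hE cE _ _ _ _ cf).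
- by move=> x; have [a _ _ _ _] := HUg x.
- by move=> x; have [_ a _ _ _] := HUg x.
- by move=> x; have [_ _ a _ _] := HUg x.
- by move=> x; have [_ _ _ a _] := HUg x.
- move=> x y hy; have [_ _ oW _ [_ [cW _ _]]] := HUg x.
  move: cW; rewrite continuous_open_subspace // => h; apply: h.
  by rewrite in_setE.
- by move=> x y; have [_ _ _ _ [_ [_ a _]]] := HUg x; exact: a.
- by move=> x y; have [_ _ _ _ [_ [_ _ a]]] := HUg x; exact: a.
have cP : closed (card_src_eq f n).
  rewrite -openC openE => v nPv.
  apply: filterS (nb v) => w h Pw; apply: nPv.
  exact: card_eq_trans (card_esym h) Pw.
split; first exact: (subclosed_compact cP cV).
rewrite openE => v Pv.
apply: filterS (nb v) => w h.
exact: card_eq_trans h Pv.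
Qed.

Theorem mainTheorem9 (V E : topologicalType) (r s : E -> V) :
  hausdorff_space V -> hausdorff_space E ->
  compact [set: V] -> compact [set: E] ->
  local_homeo r -> local_homeo s ->
  (forall v : V, exists e : E, r e = v) ->
  (forall v : V, exists e : E, s e = v) ->
  forall n : nat,
    (compact (card_src_eq s n) /\ open (card_src_eq s n)) /\
    (compact (card_src_eq r n) /\ open (card_src_eq r n)).
Proof.
move=> hV hE cV cE lr ls _ _ n.
by split; apply: clopen_card.
Qed.
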